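(* Let $q$ be a prime power, $0<k<n$, and let $S$ be the set of subspaces $Y\in\mathcal{G}_q(n,k)$ whose Ferrers diagram is the full $k\times(n-k)$ diagram with $k(n-k)$ dots. Let $X\in\mathcal{G}_q(n,k)\setminus S$ with $\mathrm{RE}(X)=(X_n,\dots,X_1)$ and identifying vector $v(X)=(v_n,\dots,v_1)$, and let $\ell$ ($0\le\ell\le n-k-1$) be such that $v_1=\dots=v_\ell=0$ and $v_{\ell+1}=1$. Then the number $\Delta_X$ of subspaces $Y\in S$ with $X<Y$ in the extended-representation order equals \[\Delta_X=\sum_{i=1}^{\ell}\bigl(q^k-1-\{X_i\}\bigr)q^{k(n-k-i)}.\]
   Context: $\mathcal{G}_q(n,k)$ is the set of $k$-dimensional subspaces of $\mathbb{F}_q^n$; field elements are identified with $\mathbb{Z}_q=\{0,\dots,q-1\}$ (with $0\mapsto0,1\mapsto1$). $\mathrm{RE}(X)$ is the unique $k\times n$ reduced row echelon matrix whose rows span $X$, with columns labelled $X_n,\dots,X_1$ from left to right. $v(X)=(v_n,\dots,v_1)$ is binary with $v_i=1$ iff column $X_i$ contains a row's leading one. The Ferrers diagram of $X$ is obtained from $\mathrm{RE}(X)$ by deleting in each row the leading one and everything to its left, deleting columns containing leading ones, right-justifying and replacing entries by dots; it has $k(n-k)$ dots iff $v(X)$ consists of $k$ ones followed by $n-k$ zeros (i.e. $v_n=\dots=v_{n-k+1}=1$). $\mathrm{EXT}(X)$ is the $(k+1)\times n$ matrix with top row $v(X)$ above $\mathrm{RE}(X)$, its $i$-th column being $\binom{v_i}{X_i}$.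 For a $q$-ary column vector $y=(y_1,\dots,y_r)^T$, $\{y\}=\sum_t y_tq^{r-t}$. Order: $X<Y$ if, at the least index $i$ where the $i$-th columns of $\mathrm{EXT}(X)$ and $\mathrm{EXT}(Y)$ differ, $\{\binom{v(X)_i}{X_i}\}<\{\binom{v(Y)_i}{Y_i}\}$. *)

(* Defs.v *)
From HB Require Import structures.
From mathcomp Require Import all_boot all_order all_algebra all_field.
Set Implicit Arguments. Unset Strict Implicit. Unset Printing Implicit Defensive.
Import GRing.Theory.

(* Subspaces of F^n are represented (mxalgebra style) by
   their canonical square matrices X : 'M[F]_n with <<X>>%MS = X.
   Columns j : 'I_n of a k x n matrix are indexed 0..n-1 from left to right,
   so column j carries the paper's label X_(n - j). *)

Section Grassmann.
Variables (F : finFieldType) (n k : nat).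
Local Open Scope ring_scope.

Definition lead (M : 'M[F]_(k, n)) (r : 'I_k) (j : 'I_n) : bool :=
  (M r j != 0) && [forall j' : 'I_n, (j' < j)%N ==> (M r j' == 0)].

Definition is_rref (M : 'M[F]_(k, n)) : bool :=
  [forall r : 'I_k, exists j : 'I_n,
     [&& lead M r j, M r j == 1 & [forall r' : 'I_k, (r' != r) ==> (M r' j == 0)]]]
  && [forall r1 : 'I_k, forall r2 : 'I_k, forall j1 : 'I_n, forall j2 : 'I_n,
        [&& (r1 < r2)%N, lead M r1 j1 & lead M r2 j2] ==> (j1 < j2)%N].

Definition RE (X : 'M[F]_n) : 'M[F]_(k, n) :=
  odflt 0 [pick M : 'M[F]_(k, n) | is_rref M && (M == X)%MS].

(* bit v of the identifying vector at column j *)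
Definition vcol (M : 'M[F]_(k, n)) (j : 'I_n) : bool := [exists r, lead M r j].

Definition ferrers_dots (M : 'M[F]_(k, n)) : nat :=
  (\sum_(r < k) #|[set j : 'I_n | [exists j0 : 'I_n, lead M r j0 && (j0 < j)%N]
                                   && ~~ vcol M j]|)%N.

Variable (phi : F -> 'I_#|F|). (* identification of F with Z_q *)

(* {X_j} : q-ary value of column j, first row most significant *)
Definition colval (M : 'M[F]_(k, n)) (j : 'I_n) : nat :=
  (\sum_(r < k) phi (M r j) * #|F| ^ (k.-1 - r))%N.

(* value of the column (v_j ; X_j) of EXT *)
Definition extval (M : 'M[F]_(k, n)) (j : 'I_n) : nat :=
  (vcol M j * #|F| ^ k + colval M j)%N.

Definition ext_col_eq (X Y : 'M[F]_n) (j : 'I_n) : bool :=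
  (vcol (RE X) j == vcol (RE Y) j) && [forall r : 'I_k, RE X r j == RE Y r j].

(* X < Y : at the least label i (= largest column j) where the columns of
   EXT(X), EXT(Y) differ, the value for X is smaller *)
Definition ext_lt (X Y : 'M[F]_n) : bool :=
  [exists j : 'I_n, [&& [forall j' : 'I_n, (j < j')%N ==> ext_col_eq X Y j'],
                       ~~ ext_col_eq X Y j & (extval (RE X) j < extval (RE Y) j)%N]].

Definition in_Grass (X : 'M[F]_n) : bool := (<<X>>%MS == X) && (\rank X == k).

Definition in_S (Y : 'M[F]_n) : bool :=
  in_Grass Y && (ferrers_dots (RE Y) == k * (n - k))%N.

End Grassmann.

(* Main.v *)
Require Import Defs.
From HB Require Import structures.
From mathcomp Require Import all_boot all_order all_algebra all_field.
From mathcomp Require Import zify.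
Import GRing.Theory.
Set Implicit Arguments. Unset Strict Implicit.

Ltac splitand := repeat match goal with H : is_true (_ && _) |- _ => case/andP: H => ? ? end.



Lemma card_range (n a b : nat) : b <= n -> #|[set j : 'I_n | a <= j < b]| = b - a.
Proof.
move=> hb.
rewrite -sum1_card.
rewrite (eq_bigl (fun j : 'I_n => a <= j < b)); last by move=> j; rewrite inE.
rewrite -(big_mkord (fun j => a <= j < b) (fun _ => 1)).
case: (leqP a b) => hab; last first.
  rewrite big1_seq; first by lia.
  by move=> i /andP[/andP[h1 h2] _]; lia.
rewrite (@big_cat_nat _ _ _ a) //=; last by lia.
rewrite (@big_cat_nat _ _ _ b a n) //=.
rewrite big_nat_cond big_pred0; last by move=> i /=; apply: negbTE; apply/negP => H; splitand; lia.
rewrite add0n addnC big_nat_cond big_pred0; last by move=> i /=; apply: negbTE; apply/negP => H; splitand; lia.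
rewrite add0n big_nat_cond (eq_bigl (fun i => (a <= i < b) && true)); last by move=> i; rewrite andbb andbT.
rewrite -big_nat_cond.
by rewrite sum_nat_const_nat; lia.
Qed.


Lemma sum_shift q k (d : 'I_k.+1 -> nat) :
  \sum_(i < k.+1) d i * q ^ i = d ord0 + q * \sum_(i < k) d (lift ord0 i) * q ^ i.
Proof.
rewrite big_ord_recl /= expn0 muln1 big_distrr /=; congr (_ + _).
apply: eq_bigr => i _; rewrite /bump leq0n /= add1n expnS; lia.
Qed.

Lemma digits_lt q k (d : 'I_k -> nat) :
  (forall i, d i < q) -> \sum_(i < k) d i * q ^ i < q ^ k.
Proof.
elim: k d => [|k IH] d hd; first by rewrite big_ord0 expn0.
rewrite sum_shift.
have := IH (fun i => d (lift ord0 i)) (fun i => hd _).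
have := hd ord0.
set S := \sum_(i < k) _.
move=> h0 h1. rewrite expnS. nia.
Qed.

Lemma digits_inj q k (d d' : 'I_k -> nat) : 0 < q ->
  (forall i, d i < q) -> (forall i, d' i < q) ->
  \sum_(i < k) d i * q ^ i = \sum_(i < k) d' i * q ^ i -> forall i, d i = d' i.
Proof.
move=> q0; elim: k d d' => [|k IH] d d' hd hd' E i; first by case: i.
move: E; rewrite !sum_shift => E.
have E0 : d ord0 = d' ord0.
  have := congr1 (modn^~ q) E.
  by rewrite (addnC (d _)) (addnC (d' _)) !(mulnC q) !modnMDl !modn_small.
have E1 := IH (fun i => d (lift ord0 i)) (fun i => d' (lift ord0 i)) (fun i => hd _) (fun i => hd' _).
move: E; rewrite E0 => /addnI /eqP; rewrite eqn_pmul2l // => /eqP E.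
case: (unliftP ord0 i) => [j ->|->] //.
exact: E1.
Qed.

Lemma incr_id k (f : 'I_k -> nat) :
  (forall i j : 'I_k, i < j -> f i < f j) -> (forall i, f i < k) -> forall i, f i = i.
Proof.
move=> hinc hlt.
have h1 : forall m (i : 'I_k), val i = m -> m <= f i.
  elim=> [|m IH] i hi //.
  have hm : m < k by case: i hi => /= i' ? ?; lia.
  have := IH (Ordinal hm) erefl.
  have := hinc (Ordinal hm) i; rewrite hi /= => /(_ (ltnSn m)); lia.
have h2 : forall d (i : 'I_k), k.-1 - i = d -> f i + d <= k.-1.
  elim=> [|d IH] i hi.
    by have := hlt i; lia.
  have hm : i.+1 < k by case: i hi => /= i' ? ?; lia.
  have e : k.-1 - (Ordinal hm) = d by rewrite /=; clear -hi; lia.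
  have := IH (Ordinal hm) e; rewrite /=.
  have := hinc i (Ordinal hm) (ltnSn _); lia.
move=> i; have := h1 (nat_of_ord i) i erefl; have := h2 (k.-1 - i) i erefl; have := ltn_ord i; lia.
Qed.

Lemma sum_eq_bound k (a : 'I_k -> nat) c :
  (forall r, a r <= c) -> \sum_(r < k) a r = k * c -> forall r, a r = c.
Proof.
move=> hb hs r.
have : \sum_(r < k) (c - a r) == 0.
  by rewrite sumnB // hs sum_nat_const card_ord subnn.
rewrite sum_nat_eq0 => /forallP /(_ r) /=; have := hb r; lia.
Qed.

Section Rref.
Variables (F : finFieldType) (n k : nat).
Local Open Scope ring_scope.
Implicit Types (M N : 'M[F]_(k, n)).

Definition Sform M := forall (r : 'I_k) (j : 'I_n), (j < k)%N -> M r j = ((r : nat) == j)%:R.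

Lemma lead_le M r j j' : lead M r j -> M r j' != 0 -> (j <= j')%N.
Proof.
case/andP=> _ /forallP h hj'; rewrite leqNgt; apply/negP => lt.
by move: (h j'); rewrite lt /= (negbTE hj').
Qed.

Lemma lead_uniq M r j j' : lead M r j -> lead M r j' -> j = j'.
Proof.
move=> h h'; apply: val_inj; apply/eqP; rewrite eqn_leq.
case/andP: (h) => nz _; case/andP: (h') => nz' _.
by rewrite (lead_le h nz') (lead_le h' nz).
Qed.

Definition pivP M r j :=
  [&& lead M r j, M r j == 1 & [forall r' : 'I_k, (r' != r) ==> (M r' j == 0)]].

Definition piv M (x0 : 'I_n) r := odflt x0 [pick j | pivP M r j].

Lemma piv_spec M x0 r : is_rref M -> pivP M r (piv M x0 r).
Proof.
case/andP=> /forallP /(_ r) /existsP [j hj] _.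
rewrite /piv; case: pickP => [j' //|/(_ j)]; by rewrite /= /pivP hj.
Qed.

Lemma piv_lt M x0 (r1 r2 : 'I_k) : is_rref M -> (r1 < r2)%N -> (piv M x0 r1 < piv M x0 r2)%N.
Proof.
move=> hM lt; have := piv_spec x0 r1 hM; have := piv_spec x0 r2 hM.
case/andP: hM => _ /forallP /(_ r1) /forallP /(_ r2) /forallP /(_ (piv M x0 r1))
  /forallP /(_ (piv M x0 r2)) /implyP h.
case/andP=> l2 _ /andP[l1 _]; apply: h; by rewrite lt l1 l2.
Qed.

Lemma piv_lead M x0 r j : is_rref M -> lead M r j -> j = piv M x0 r.
Proof. move=> hM hl; apply: (lead_uniq hl); by case/andP: (piv_spec x0 r hM). Qed.

Lemma rref_Sform M x0 : is_rref M -> (forall r, (piv M x0 r < k)%N) -> Sform M.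
Proof.
move=> hM hlt.
have hid := incr_id (fun r1 r2 lt => piv_lt x0 hM lt) hlt.
move=> r j hj.
have ej : j = piv M x0 (Ordinal hj) by apply: val_inj; rewrite /= hid.
case/and3P: (piv_spec x0 (Ordinal hj) hM) => _ h1 /forallP /(_ r).
rewrite -ej; case: (eqVneq (r : nat) j) => [er|ner].
  have -> : r = Ordinal hj by apply: val_inj.
  by move=> _; rewrite -ej in h1; move/eqP: h1.
have : r != Ordinal hj by apply/eqP => e; move: ner; rewrite e eqxx.
by move=> -> /= /eqP ->.
Qed.


Section SformProps.
Hypothesis hkn : (k <= n)%N.
Variable M : 'M[F]_(k, n).
Hypothesis hS : Sform M.

Let wr (r : 'I_k) : 'I_n := widen_ord hkn r.

Lemma Sform_lead r j : lead M r j = ((j : nat) == r).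
Proof.
case: (ltngtP j r) => h.
- by rewrite /lead hS ?(ltn_trans h) // gtn_eqF //= eqxx.
- apply/negbTE; apply/negP => /andP[_ /forallP /(_ (wr r))].
  by rewrite /= h hS //= eqxx oner_eq0.
- have hj : (j < k)%N by rewrite h.
  rewrite /lead hS // h eqxx oner_eq0 /=.
  apply/forallP => j'; apply/implyP => lt; rewrite hS ?(ltn_trans lt) //.
  by rewrite gtn_eqF // -h.
Qed.

Lemma Sform_vcol j : vcol M j = (j < k)%N.
Proof.
apply/existsP/idP => [[r]|hj]; first by rewrite Sform_lead => /eqP ->.
by exists (Ordinal hj); rewrite Sform_lead.
Qed.

Lemma Sform_rref : is_rref M.
Proof.
apply/andP; split.
  apply/forallP => r; apply/existsP; exists (wr r).
  apply/and3P; split; first by rewrite Sform_lead /= eqxx.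
    by rewrite hS //= eqxx.
  apply/forallP => r'; apply/implyP => ne; rewrite hS //=.
  by have -> : ((r' : nat) == r) = false by apply/negbTE.
apply/forallP => r1; apply/forallP => r2; apply/forallP => j1; apply/forallP => j2.
apply/implyP; rewrite !Sform_lead => /and3P [lt /eqP -> /eqP ->] //.
Qed.

Lemma Sform_dots : ferrers_dots M = (k * (n - k))%N.
Proof.
rewrite /ferrers_dots (eq_bigr (fun _ => n - k)%N); first by rewrite sum_nat_const card_ord.
move=> r _; rewrite -(@card_range n k n (leqnn n)); apply: eq_card => j; rewrite !inE.
rewrite Sform_vcol -leqNgt ltn_ord andbT.
case: (leqP k j) => hj; rewrite ?andbT ?andbF //.
  apply/existsP; exists (wr r); rewrite Sform_lead /= eqxx /=.
  by apply: leq_trans hj.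
Qed.

Lemma Sform_rank : \rank M = k.
Proof.
apply/eqP; rewrite eqn_leq rank_leq_row /=.
pose E : 'M[F]_(n, k) := \matrix_(j, r) ((j : nat) == r)%:R.
have hME : M *m E = 1%:M.
  apply/matrixP => r r'; rewrite !mxE (bigD1 (wr r')) //= big1 ?addr0.
    by rewrite mxE hS //= eqxx mulr1.
  move=> j hj; rewrite mxE.
  have -> : ((j : nat) == r') = false.
    by apply/negbTE; apply: contra hj => /eqP e; apply/eqP; apply: val_inj.
  by rewrite mulr0.
by rewrite -{1}(mxrank1 F k) -hME mxrankM_maxl.
Qed.

End SformProps.


Lemma mulSform (hkn : (k <= n)%N) M (C : 'M[F]_k) r (r' : 'I_k) :
  Sform M -> (C *m M) r (widen_ord hkn r') = C r r'.
Proof.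
move=> hS; rewrite !mxE (bigD1 r') //= big1 ?addr0.
  by rewrite hS //= eqxx mulr1.
move=> j hj; rewrite hS //=.
have -> : ((j : nat) == r') = false by apply/negbTE.
by rewrite mulr0.
Qed.

Lemma dots_Sform M (x0 : 'I_n) (hkn : (k <= n)%N) :
  is_rref M -> ferrers_dots M = (k * (n - k))%N -> Sform M.
Proof.
move=> hM hd; apply: (rref_Sform (x0:=x0) hM).
set p := piv M x0.
have pinj : injective p.
  move=> r1 r2 e; apply/eqP; case: (ltngtP r1 r2) => h //.
  - by have := piv_lt x0 hM h; rewrite -/p e ltnn.
  - by have := piv_lt x0 hM h; rewrite -/p e ltnn.
  - by apply/eqP; apply: val_inj.
set V := [set j | vcol M j].
have hV : (k <= #|V|)%N.
  have -> : k = #|p @: [set: 'I_k]| by rewrite card_imset // cardsT card_ord.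
  apply: subset_leq_card; apply/subsetP => j /imsetP [r _ ->].
  rewrite inE; apply/existsP; exists r; by case/andP: (piv_spec x0 r hM).
have hD : forall r, (#|[set j : 'I_n | [exists j0, lead M r j0 && (j0 < j)%N] && ~~ vcol M j]| <= n - k)%N.
  move=> r; apply: (@leq_trans #|~: V|).
    by apply: subset_leq_card; apply/subsetP => j; rewrite !inE => /andP[_ ->].
  have := cardsC V; rewrite card_ord; lia.
have heq := sum_eq_bound hD hd.
move=> r.
have hk : (k.-1 < k)%N by case: (k) r => [[]|] //.
set rk := Ordinal hk.
have hrk : (p rk < k)%N.
  have := heq rk.
  have : (#|[set j : 'I_n | [exists j0, lead M rk j0 && (j0 < j)%N] && ~~ vcol M j]|
           <= #|[set j : 'I_n | (p rk).+1 <= j < n]|)%N.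
    apply: subset_leq_card; apply/subsetP => j; rewrite !inE => /andP[/existsP[j0 /andP[hl lt]] _].
    by rewrite ltn_ord andbT /p -(piv_lead x0 hM hl).
  rewrite card_range //; have := ltn_ord (p rk); lia.
case: (ltngtP r rk) => h.
- by apply: ltn_trans hrk; apply: piv_lt.
- by have := ltn_ord r; rewrite /= in h; lia.
- by have -> : r = rk by apply: val_inj.
Qed.

Lemma RE_Sform (hkn : (k <= n)%N) M : Sform M -> RE k (<<M>>%MS) = M.
Proof.
move=> hS; rewrite /RE; case: pickP => [N /andP[hN eN] | /(_ M)]; last first.
  rewrite Sform_rref //=; move/negbT/negP; case; apply/eqmxP.
  exact: eqmx_sym (genmxE M).
have eNM : (N :=: M)%MS := eqmx_trans (eqmxP eN) (genmxE M).
have : (N <= M)%MS by rewrite eNM.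
case/submxP => C eC; rewrite /= eC.
have hlt : forall x0 r, (piv N x0 r < k)%N.
  move=> x0 r.
  case/and3P: (piv_spec x0 r hN) => hl _ _.
  have [r' hr'] : exists r', C r r' != 0.
    apply/existsP; apply: contraT; rewrite negb_exists => /forallP h0.
    case/andP: (hl) => nz _; move: nz; rewrite eC !mxE big1 ?eqxx //.
    by move=> r' _; move: (h0 r'); rewrite negbK => /eqP ->; rewrite mul0r.
  have : N r (widen_ord hkn r') != 0 by rewrite eC mulSform.
  move/(lead_le hl) => le; exact: leq_ltn_trans le (ltn_ord r').
apply/matrixP => r j.
have hSN : Sform N := rref_Sform (x0:=j) hN (hlt j).
have -> : C = 1%:M.
  apply/matrixP => a b; rewrite -(mulSform hkn C a b hS) -eC hSN //= !mxE.
  done.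
by rewrite (mul1mx M).
Qed.


Lemma in_S_RE (hk : (0 < k)%N) (hkn : (k < n)%N) (Y : 'M[F]_n) :
  in_S k Y -> Sform (RE k Y) /\ (RE k Y == Y)%MS.
Proof.
case/andP => _ /eqP; rewrite /RE; case: pickP => [N /andP[hN eN] hd | _ /=].
  split=> //; exact: (dots_Sform (Ordinal (ltn_trans hk hkn)) (ltnW hkn) hN hd).
have -> : ferrers_dots (0 : 'M[F]_(k, n)) = 0%N.
  rewrite /ferrers_dots big1 // => r _; apply/eqP; rewrite cards_eq0; apply/eqP/setP => j.
  rewrite !inE; apply/negbTE; rewrite negb_and; apply/orP; left.
  rewrite negb_exists; apply/forallP => j0; by rewrite /lead mxE eqxx.
move=> h; exfalso; move: h; have : (0 < n - k)%N by rewrite subn_gt0.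
move=> h1 h2; have : (0 < k * (n - k))%N by rewrite muln_gt0 hk h1.
by rewrite -h2.
Qed.

Lemma Sform_in_S (hk : (0 < k)%N) (hkn : (k < n)%N) M : Sform M -> in_S k (<<M>>%MS).
Proof.
move=> hS; rewrite /in_S /in_Grass genmx_id eqxx mxrank_gen Sform_rank ?eqxx //=;
  last exact: ltnW.
by rewrite RE_Sform ?Sform_dots //; exact: ltnW.
Qed.

End Rref.

Section Digits.
Variables (F : finFieldType) (k : nat) (phi : F -> 'I_#|F|).
Hypothesis phi_bij : bijective phi.

Definition cv (c : {ffun 'I_k -> F}) : nat :=
  \sum_(r < k) phi (c r) * #|F| ^ (k.-1 - r).

Lemma cv_rev c : cv c = \sum_(i < k) phi (c (rev_ord i)) * #|F| ^ i.
Proof.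
rewrite /cv (reindex_inj rev_ord_inj) /=; apply: eq_bigr => i _.
by congr (_ * _ ^ _); rewrite /=; have := ltn_ord i; lia.
Qed.

Lemma cv_lt c : cv c < #|F| ^ k.
Proof. by rewrite cv_rev; apply: digits_lt => i; apply: ltn_ord. Qed.

Lemma cv_inj : injective cv.
Proof.
move=> c c'; rewrite !cv_rev => E.
have q0 : 0 < #|F| by apply/card_gt0P; exists 0%R.
have h := digits_inj q0 (fun i => ltn_ord _) (fun i => ltn_ord _) E.
apply/ffunP => r; rewrite -(rev_ordK r); apply: (bij_inj phi_bij); apply: val_inj.
exact: h.
Qed.

Lemma card_cv_gt v : v < #|F| ^ k ->
  #|[set c : {ffun 'I_k -> F} | v < cv c]| = #|F| ^ k - v.+1.
Proof.
move=> hv.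
pose h c : 'I_(#|F| ^ k) := Ordinal (cv_lt c).
have hinj : injective h by move=> c c' /(congr1 val) /cv_inj.
rewrite -(card_imset _ hinj).
rewrite -(@card_range (#|F| ^ k) v.+1 (#|F| ^ k) (leqnn _)).
apply: eq_card => i; rewrite inE ltn_ord andbT.
apply/imsetP/idP => [[c] | hi].
  by rewrite inE => hc ->.
have : i \in codom h by apply: inj_card_onto => //; rewrite card_ffun !card_ord.
case/codomP => c ei; exists c => //; rewrite inE; move: hi; by rewrite ei.
Qed.

End Digits.

Lemma prod_G n k j w Q : k <= j -> j < n ->
  \prod_(i < n) (if i < k then 1 else if j < i then 1 else if i == j :> nat then w else Q)
  = w * Q ^ (j - k).
Proof.
move=> hkj hjn.
rewrite -(@big_mkord _ _ _ n xpredT (fun i => if i < k then 1 else if j < i then 1 else if i == j then w else Q)).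
rewrite (@big_cat_nat _ _ _ k) //=; last by lia.
rewrite (@big_cat_nat _ _ _ j k n) //=; last by lia.
rewrite (@big_cat_nat _ _ _ j.+1 j n) //= big_nat1.
rewrite (eq_big_nat _ _ (F2 := fun _ => 1)); last by move=> i hi; have -> : i < k by lia.
rewrite [\prod_(k <= i < j) _](eq_big_nat _ _ (F2 := fun _ => Q)); last first.
  move=> i hi; have -> : (i < k) = false by lia.
  have -> : (j < i) = false by lia.
  by have -> : (i == j) = false by lia.
rewrite [\prod_(j.+1 <= i < n) _](eq_big_nat _ _ (F2 := fun _ => 1)); last first.
  move=> i hi; have -> : (i < k) = false by lia.
  by have -> : (j < i) = true by lia.
rewrite !prod_nat_const_nat !exp1n ltnn eqxx.
have -> : (j < k) = false by lia.
by rewrite mul1n muln1 mulnC.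
Qed.

Lemma sum_uniq (T : finType) (P : pred T) : (forall a b, P a -> P b -> a = b) ->
  (if [exists a, P a] then 1 else 0) = \sum_a (if P a then 1 else 0).
Proof.
move=> hu; case: existsP => [[a ha]|hn].
  rewrite (bigD1 a) //= ha big1 // => b hb; case: ifP => // pb.
  by move: hb; rewrite (hu _ _ ha pb) eqxx.
by rewrite big1 // => a _; case: ifP => // pa; case: hn; exists a.
Qed.

Section Main.
Variables (F : finFieldType) (n k : nat) (phi : F -> 'I_#|F|).
Hypothesis phi_bij : bijective phi.
Hypotheses (hk0 : 0 < k) (hkn : k < n).
Variables (R : 'M[F]_(k, n)) (l : nat).
Hypothesis hl : l <= n - k - 1.
Hypothesis hv0 : forall j : 'I_n, 1 <= n - j <= l -> ~~ vcol R j.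
Hypothesis hv1 : forall j : 'I_n, n - j = l.+1 -> vcol R j.

Definition colf (M : 'M[F]_(k, n)) (j : 'I_n) : {ffun 'I_k -> F} := [ffun r => M r j].

Lemma colval_cv (M : 'M[F]_(k, n)) (j : 'I_n) : colval phi M j = cv phi (colf M j).
Proof. by rewrite /colval /cv; apply: eq_bigr => r _; rewrite ffunE. Qed.

Lemma colval_lt (M : 'M[F]_(k, n)) (j : 'I_n) : colval phi M j < #|F| ^ k.
Proof. by rewrite colval_cv cv_lt. Qed.

Lemma colf_eqE (A B : 'M[F]_(k, n)) j :
  [forall r, A r j == B r j] = (colf A j == colf B j).
Proof.
apply/forallP/eqP => [h|h r]; first by apply/ffunP => r; rewrite !ffunE; apply/eqP.
by have := congr1 (fun f : {ffun 'I_k -> F} => f r) h; rewrite !ffunE => ->.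
Qed.

Definition Qj (j : 'I_n) (M : 'M[F]_(k, n)) :=
  [&& n - l <= j, [forall j' : 'I_n, (j < j') ==> (colf R j' == colf M j')]
    & colval phi R j < colval phi M j].

Lemma extQ (X Y : 'M[F]_n) : RE k X = R -> Sform (RE k Y) ->
  ext_lt k phi X Y = [exists j, Qj j (RE k Y)].
Proof.
move=> eX hS; rewrite /ext_lt /ext_col_eq /extval eX.
set M := RE k Y.
have vM : forall j, vcol M j = (j < k) := Sform_vcol (ltnW hkn) hS.
have vR : forall j : 'I_n, n - l <= j -> vcol R j = false.
  by move=> j hj; apply/negbTE; apply: hv0; have := ltn_ord j; lia.
apply/existsP/existsP => [[j /and3P[hall hne hlt]] | [j /and3P[hj hall hlt]]]; exists j.
  have hj : n - l <= j.
    rewrite leqNgt; apply/negP => hj.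
    have hj0 : n - l - 1 < n by lia.
    pose j0 := Ordinal hj0.
    have v1 : vcol R j0 by apply: hv1 => /=; lia.
    have v2 : vcol M j0 = false by rewrite vM /=; lia.
    case: (ltngtP j j0) => h.
    - by move: hall => /forallP /(_ j0) /implyP /(_ h) /andP[/eqP]; rewrite v1 v2.
    - by move: h; rewrite /=; lia.
    - have ej : j = j0 by apply: val_inj.
      move: hlt; rewrite ej v1 v2 /=; have := colval_lt M j0; set Q := #|F| ^ k; lia.
  apply/and3P; split => //.
    apply/forallP => j'; apply/implyP => lt.
    by move: hall => /forallP /(_ j') /implyP /(_ lt) /andP[_]; rewrite colf_eqE.
  have jk : (j < k) = false by apply/negbTE; rewrite -leqNgt; lia.
  by move: hlt; rewrite vR // vM jk /=.
apply/and3P; split.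
- apply/forallP => j'; apply/implyP => lt.
  move: hall => /forallP /(_ j') /implyP /(_ lt) he.
  rewrite colf_eqE he andbT vR ?vM; last by lia.
  by apply/eqP; symmetry; apply/negbTE; rewrite -leqNgt; lia.
- rewrite colf_eqE; apply/negP => /andP[_ /eqP e].
  by move: hlt; rewrite !colval_cv e ltnn.
- rewrite vR // vM.
  have -> : (j < k) = false by apply/negbTE; rewrite -leqNgt; lia.
  by [].
Qed.


Definition Sformb (M : 'M[F]_(k, n)) :=
  [forall r : 'I_k, [forall j : 'I_n, (j < k) ==> (M r j == (((r : nat) == j)%:R)%R)]].

Lemma SformP M : reflect (Sform M) (Sformb M).
Proof.
apply: (iffP forallP) => [h r j hj | h r].
  by move: (h r) => /forallP /(_ j) /implyP /(_ hj) /eqP.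
by apply/forallP => j; apply/implyP => hj; apply/eqP; exact: h.
Qed.

Lemma stepB (X : 'M[F]_n) : RE k X = R ->
  #|[set Y : 'M[F]_n | in_S k Y && ext_lt k phi X Y]|
  = #|[set M : 'M[F]_(k, n) | Sformb M && [exists j, Qj j M]]|.
Proof.
move=> eX.
set S := [set M : 'M[F]_(k, n) | _].
have hinj : {in S &, injective (fun M => <<M>>%MS)}.
  move=> M1 M2; rewrite !inE => /andP[/SformP h1 _] /andP[/SformP h2 _] e.
  by rewrite -(RE_Sform (ltnW hkn) h1) -(RE_Sform (ltnW hkn) h2) e.
rewrite -(card_in_imset hinj); apply: eq_card => Y; rewrite inE.
apply/idP/imsetP => [/andP[hY hlt] | [M]].
  case: (in_S_RE hk0 hkn hY) => hS eY.
  exists (RE k Y).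
    by rewrite inE; apply/andP; split; [apply/SformP | rewrite -(extQ eX hS)].
  case/andP: hY => /andP[/eqP gY _] _.
  by rewrite -{1}gY (genmxP eY).
rewrite inE => /andP[/SformP hS hQ] ->.
apply/andP; split; first exact: Sform_in_S.
by rewrite (extQ eX) RE_Sform //; exact: ltnW.
Qed.


Section CardJ.
Variable (j : 'I_n).
Hypothesis hj : n - l <= j.

Let e (j' : 'I_n) : {ffun 'I_k -> F} := [ffun r : 'I_k => (((r : nat) == j')%:R)%R].
Let Cset (j' : 'I_n) : {set {ffun 'I_k -> F}} :=
  [set c | if j' < k then c == e j' else if j < j' then c == colf R j'
           else if j' == j then colval phi R j < cv phi c else true].

Lemma memA (M : 'M[F]_(k, n)) :
  (Sformb M && Qj j M) = [forall j', colf M j' \in Cset j'].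
Proof.
have hjk : k < j by lia.
apply/andP/forallP => [[/SformP hS /and3P[_ hall hlt]] j' | h].
  rewrite inE; case: ifP => h1.
    by apply/eqP/ffunP => r; rewrite !ffunE hS.
  case: ifP => h2.
    by move: hall => /forallP /(_ j') /implyP /(_ h2); rewrite eq_sym.
  case: ifP => // /eqP ->.
  by rewrite -colval_cv.
split.
  apply/SformP => r j' hj'; move: (h j'); rewrite inE hj' => /eqP /(congr1 (fun f : {ffun 'I_k -> F} => f r)).
  by rewrite !ffunE.
apply/and3P; split => //.
  apply/forallP => j'; apply/implyP => lt; move: (h j'); rewrite inE.
  have -> : (j' < k) = false by lia.
  by rewrite lt eq_sym.
move: (h j); rewrite inE ltnn eqxx -colval_cv.
by have -> : (j < k) = false by lia.
Qed.

Lemma card_Cset (j' : 'I_n) : #|Cset j'| =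
  if j' < k then 1 else if j < j' then 1 else if j' == j :> nat
  then #|F| ^ k - 1 - colval phi R j else #|F| ^ k.
Proof.
case: ifP => h1.
  rewrite -(cards1 (e j')); apply: eq_card => c; by rewrite !inE h1.
case: ifP => h2.
  rewrite -(cards1 (colf R j')); apply: eq_card => c; by rewrite !inE h1 h2.
case: ifP => h3.
  rewrite -subnDA add1n -(card_cv_gt phi_bij) //; last exact: colval_lt.
  by apply: eq_card => c; rewrite !inE h1 h2 (h3 : (j' == j) = true).
have -> : #|F| ^ k = #|{ffun 'I_k -> F}| by rewrite card_ffun card_ord.
rewrite -cardsT; apply: eq_card => c.
by rewrite !inE h1 h2 (h3 : (j' == j) = false).
Qed.

Lemma card_j : #|[set M : 'M[F]_(k, n) | Sformb M && Qj j M]|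
  = (#|F| ^ k - 1 - colval phi R j) * #|F| ^ (k * (j - k)).
Proof.
pose h (M : 'M[F]_(k, n)) : {ffun 'I_n -> {ffun 'I_k -> F}} := [ffun j' => colf M j'].
have hinj : injective h.
  move=> M1 M2 E; apply/matrixP => r j'.
  have := congr1 (fun f : {ffun 'I_n -> {ffun 'I_k -> F}} => f j' r) E.
  by rewrite /h !ffunE.
rewrite -(card_imset _ hinj).
have -> : #|h @: [set M : 'M[F]_(k, n) | Sformb M && Qj j M]| = #|family Cset|.
  apply: eq_card => f; apply/imsetP/familyP => [[M] | hf].
    rewrite inE memA => /forallP hM -> j'; by rewrite /h ffunE.
  exists (\matrix_(r, j') f j' r)%R.
    rewrite inE memA; apply/forallP => j'.
    have -> : colf (\matrix_(r, j') f j' r)%R j' = f j'.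
      by apply/ffunP => r; rewrite ffunE mxE.
    exact: hf.
  by apply/ffunP => j'; apply/ffunP => r; rewrite /h !ffunE mxE.
rewrite card_family foldrE big_map big_enum /=.
rewrite (eq_bigr _ (fun j' _ => card_Cset j')).
rewrite prod_G; [by rewrite -expnM | lia | exact: ltn_ord].
Qed.

End CardJ.


Lemma Qj_uniq (M : 'M[F]_(k, n)) a b : Qj a M -> Qj b M -> a = b.
Proof.
have key : forall a b : 'I_n, a < b -> Qj a M -> Qj b M -> False.
  move=> a' b' h ha hb.
  case/and3P: ha => _ /forallP /(_ b') /implyP /(_ h) /eqP e _.
  by case/and3P: hb => _ _; rewrite !colval_cv e ltnn.
move=> ha hb; case: (ltngtP a b) => h.
- by case: (key _ _ h ha hb).
- by case: (key _ _ h hb ha).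
- exact: val_inj.
Qed.

Lemma count_Q : #|[set M : 'M[F]_(k, n) | Sformb M && [exists j, Qj j M]]|
  = \sum_(j : 'I_n | n - l <= j) (#|F| ^ k - 1 - colval phi R j) * #|F| ^ (k * (j - k)).
Proof.
rewrite -sum1_card big_mkcond /=.
rewrite (eq_bigr (fun M => \sum_(j : 'I_n)
   (if M \in [set M : 'M[F]_(k, n) | Sformb M && Qj j M] then 1 else 0))); last first.
  move=> M _; rewrite inE.
  under [RHS]eq_bigr do rewrite inE.
  case: (Sformb M) => /=; last by rewrite big1.
  apply: sum_uniq => a b; exact: Qj_uniq.
rewrite exchange_big /=.
rewrite [RHS]big_mkcond /=; apply: eq_bigr => j _.
rewrite -big_mkcond sum1_card /=.
case: ifP => hj; first exact: card_j.
apply/eqP; rewrite cards_eq0; apply/eqP/setP => M; rewrite !inE; apply/negbTE.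
by rewrite /Qj hj andbF.
Qed.

End Main.

Theorem lemma6 (F : finFieldType) (n k : nat) (phi : F -> 'I_#|F|)
  (phi_bij : bijective phi)
  (phi0 : nat_of_ord (phi 0%R) = 0) (phi1 : nat_of_ord (phi 1%R) = 1)
  (hk0 : 0 < k) (hkn : k < n)
  (X : 'M[F]_n) (hX : in_Grass k X) (hXS : ~~ in_S k X)
  (l : nat) (hl : l <= n - k - 1)
  (hv0 : forall j : 'I_n, 1 <= n - j <= l -> ~~ vcol (RE k X) j)
  (hv1 : forall j : 'I_n, n - j = l.+1 -> vcol (RE k X) j) :
  #|[set Y : 'M[F]_n | in_S k Y && ext_lt k phi X Y]|
  = \sum_(j : 'I_n | 1 <= n - j <= l)
       (#|F| ^ k - 1 - colval phi (RE k X) j) * #|F| ^ (k * (n - k - (n - j))).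
Proof.
rewrite (stepB phi hk0 hkn hl hv0 hv1 (erefl (RE k X))).
rewrite (count_Q phi_bij hk0 hkn (RE k X) hl).
apply: eq_big => [j|j _].
  have hj := ltn_ord j; rewrite /=; apply/idP/andP => [h|[h1 h2]]; first (split; lia).
  lia.
have hj := ltn_ord j.
by have -> : n - k - (n - j) = j - k by lia.
Qed.
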